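(* Let $A\in\mathbb{R}^{N\times N}$ be invertible and equilibrated in the $L^2$ norm (every row of $A$ has Euclidean norm $1$), and suppose $AA^T$ has at most $K$ nonzero elements in every row. Then for any invertible diagonal matrix $G\in\mathbb{R}^{N\times N}$, $$\kappa(A)=\|A\|_2\|A^{-1}\|_{S^4}\le\sqrt K\,\|G^{-1}A\|_2\|A^{-1}G\|_{S^4}=\sqrt K\,\kappa(G^{-1}A).$$
   Context: For invertible $B$, $\kappa(B):=\|B\|_2\|B^{-1}\|_{S^4}$, where $\|\cdot\|_2$ is the spectral norm and $\|M\|_{S^4}:=\left(\sum_n s_n^4\right)^{1/4}$ with $s_n$ the singular values of $M$. *)

(* Defs.v *)
From HB Require Import structures.
From mathcomp Require Import all_boot all_order all_algebra.
From mathcomp Require Import classical_sets boolp reals.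
Set Implicit Arguments. Unset Strict Implicit. Unset Printing Implicit Defensive.
Import Order.TTheory GRing.Theory Num.Theory.
Local Open Scope ring_scope.
Local Open Scope classical_set_scope.

Definition vnorm {R : realType} {N : nat} (v : 'cV[R]_N) : R :=
  Num.sqrt (\sum_(i < N) v i 0 ^+ 2).

Definition spec_norm {R : realType} {N : nat} (B : 'M[R]_N) : R :=
  sup [set vnorm (B *m x) | x in [set x : 'cV[R]_N | vnorm x = 1]].

Definition is_sing_vals {R : realType} {N : nat} (M : 'M[R]_N) (s : 'rV[R]_N) : Prop :=
  (forall i, 0 <= s 0 i) /\
  exists U V : 'M[R]_N, U^T *m U = 1%:M /\ V^T *m V = 1%:M /\
    M = U *m diag_mx s *m V^T.

Definition sing_vals {R : realType} {N : nat} (M : 'M[R]_N) : 'rV[R]_N :=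
  xget 0 (is_sing_vals M).

Definition schatten4 {R : realType} {N : nat} (M : 'M[R]_N) : R :=
  Num.sqrt (Num.sqrt (\sum_(i < N) (sing_vals M 0 i) ^+ 4)).

Definition kappa {R : realType} {N : nat} (B : 'M[R]_N) : R :=
  spec_norm B * schatten4 (invmx B).

(* Main.v *)
Require Import Defs.
From HB Require Import structures.
From mathcomp Require Import all_boot all_order all_algebra.
From mathcomp Require Import classical_sets boolp reals.
From mathcomp Require Import ring lra.
From mathcomp Require Import complex spectral sesquilinear.
Import Order.TTheory GRing.Theory Num.Theory.
Local Open Scope ring_scope.
Local Open Scope classical_set_scope.
Set Implicit Arguments. Unset Strict Implicit. Unset Printing Implicit Defensive.

Section S.
Variable R : realType.
Lemma real_eig n (P : 'M[R]_n.+1) : P^T = P ->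
  exists l : R, exists2 v : 'rV[R]_n.+1, v *m P = l *: v & v != 0.
Proof.
move=> Psym.
pose f := (@real_complex_def R (Phant R) : {rmorphism R -> R[i]}).
pose P' := map_mx f P.
have P'sym : P' \is symmetricmx.
  apply/is_hermitianmxP; rewrite expr0 scale1r map_mx_id // /P' map_trmx Psym //.
have P'real : P' \is a mxOver Num.real.
  by apply/mxOverP => i j; rewrite mxE; apply/complex_realP; eexists.
have P'herm := realsym_hermsym P'sym P'real.
have /orthomx_spectralP P'E := hermitian_normalmx P'herm.
have dreal := hermitian_spectral_diag_real P'herm.
set X := spectralmx P' in P'E; set d := spectral_diag P' in P'E dreal.
have Xu : X \in unitmx by apply: spectral_unit.
have /complex_realP [l dl] : d 0 ord0 \is Num.real by apply: (mxOverP dreal).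
exists l; apply/eigenvalueP.
rewrite -(eigenvalue_map f) /=.
 have -> : f l = d 0 ord0 by rewrite dl.
 apply/eigenvalueP.
exists (row ord0 X).
  have : X *m P' = diag_mx d *m X by rewrite {1}P'E !mulmxA mulmxV // mul1mx.
  move=> /(congr1 (row ord0)); rewrite !row_mul => ->.
  apply/rowP => j; rewrite !mxE (bigD1 ord0) //= big1 ?addr0; last first.
    by move=> k /negbTE kn; rewrite !mxE eq_sym kn mulr0n mul0r.
  by rewrite !mxE eqxx mulr1n.
apply/negP => /eqP X0.
move: (Xu); rewrite unitmxE.
rewrite (expand_det_row _ ord0) big1 ?unitr0 // => j _.
by have := congr1 (fun v : 'rV_n.+1 => v ord0 j) X0; rewrite !mxE => ->; rewrite mul0r.
Qed.
Lemma trmx_mulT m n (v : 'cV[R]_m) (A : 'M[R]_(m,n)) : v^T *m A = (A^T *m v)^T.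
Proof. by rewrite trmx_mul trmxK. Qed.

Lemma vTv_sum m (v : 'cV[R]_m) : (v^T *m v) 0 0 = \sum_i v i 0 ^+ 2.
Proof. by rewrite mxE; apply: eq_bigr => i _; rewrite mxE expr2. Qed.

Lemma sumsq_eq0 m (v : 'cV[R]_m) : \sum_i v i 0 ^+ 2 = 0 -> v = 0.
Proof.
move=> h0; have : \sum_i v i 0 ^+ 2 == 0 by rewrite h0.
rewrite psumr_eq0; last by move=> i _; rewrite sqr_ge0.
move=> /allP H.
apply/matrixP => i j; rewrite ord1 mxE.
by apply/eqP; rewrite -sqrf_eq0; apply: (H i); rewrite mem_index_enum.
Qed.

Lemma householder n (u : 'cV[R]_n.+1) : u^T *m u = 1%:M ->
  exists H : 'M[R]_n.+1, [/\ H^T = H, H^T *m H = 1%:M &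
     H *m delta_mx ord0 0 = u].
Proof.
move=> uu.
set e : 'cV[R]_n.+1 := delta_mx ord0 0.
set w := u - e.
have Te : forall v : 'cV[R]_n.+1, v^T *m e = (v ord0 0)%:M.
  move=> v; rewrite /e -colE (mx11_scalar (col _ _)) !mxE //.
have ee : e^T *m e = 1%:M by rewrite Te /e mxE !eqxx.
have eu : e^T *m u = (u ord0 0)%:M by rewrite trmx_mulT Te tr_scalar_mx.
have [w0|wn0] := eqVneq w 0.
  exists 1%:M; rewrite trmx1 mul1mx; split => //.
  by move/eqP: w0; rewrite subr_eq0 => /eqP ->; rewrite mul1mx.
set t := (w^T *m w) 0 0.
have wwt : w^T *m w = t%:M by rewrite (mx11_scalar (w^T *m w)).
have tn0 : t != 0.
  by apply: contra wn0 => /eqP; rewrite /t vTv_sum => /sumsq_eq0 ->.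
have tE : t = 2 - 2 * u ord0 0.
  have := wwt; have wT : w^T = u^T - e^T by apply/matrixP => i j; rewrite !mxE.
  rewrite wT mulmxBl !mulmxBr /w.
  rewrite uu ee Te eu => /(congr1 (fun M : 'M_1 => M 0 0)).
  rewrite !mxE !eqxx /= !mulr1n => <-; ring.
set W := w *m w^T.
exists (1%:M - (2 / t) *: W).
have WT : W^T = W by rewrite /W trmx_mul trmxK.
have HT : (1%:M - (2 / t) *: W)^T = 1%:M - (2 / t) *: W.
  by rewrite linearB /= trmx1 linearZ /= WT.
have WW : W *m W = t *: W.
  by rewrite /W mulmxA -(mulmxA w) wwt mul_mx_scalar scalemxAl.
split => //.
  rewrite HT mulmxBl !mulmxBr !mul1mx !mulmx1 -!scalemxAl -!scalemxAr.
  rewrite WW !scalerA.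
  have -> : 2 / t * (2 / t) * t = 2 * (2 / t) by field.
  by apply/matrixP => i j; rewrite !mxE; ring.
rewrite mulmxDl mul1mx mulNmx -scalemxAl /W -mulmxA Te.
have -> : w ord0 0 = u ord0 0 - 1 by rewrite /w /e !mxE eqxx.
rewrite mul_mx_scalar scalerA.
have -> : 2 / t * (u ord0 0 - 1) = -1.
  rewrite tE; have : 2 - 2 * u ord0 0 != 0 by rewrite -tE.
  move=> h; field; rewrite h //.
by rewrite scaleN1r opprK /w addrC subrK.
Qed.

Lemma spectral n (P : 'M[R]_n) : P^T = P ->
  exists Q : 'M[R]_n, exists d : 'rV[R]_n,
    Q^T *m Q = 1%:M /\ P = Q *m diag_mx d *m Q^T.
Proof.
elim: n P => [|n IH] P Psym.
  exists 1%:M, 0; split; first by rewrite trmx1 mul1mx.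
  by apply/matrixP => -[].
have [l [v vP vn0]] := @real_eig n P Psym.
set u0 := v^T.
have Pu0 : P *m u0 = l *: u0 by rewrite /u0 -{1}Psym -trmx_mul vP linearZ.
set s := (u0^T *m u0) 0 0.
have s_gt0 : 0 < s.
  rewrite lt_def /s vTv_sum sumr_ge0 ?andbT; last by move=> i _; rewrite sqr_ge0.
  apply/negP => /eqP /sumsq_eq0 h; move/negP: vn0; apply.
  by rewrite -(trmxK v) -/u0 h trmx0.
set u := (Num.sqrt s)^-1 *: u0.
have uu : u^T *m u = 1%:M.
  have tZ : forall (c : R) (x : 'cV[R]_n.+1), (c *: x)^T = c *: x^T.
    by move=> c x; apply/matrixP => i j; rewrite !mxE.
  rewrite /u tZ -scalemxAl -scalemxAr (mx11_scalar (u0^T *m u0)) -/s.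
  rewrite !scalerA.
  have -> : s%:M = s *: (1%:M : 'M[R]_1) by rewrite scalemx1.
  rewrite scalerA -[RHS]scale1r; congr (_ *: _).
  have : Num.sqrt s != 0 by rewrite sqrtr_eq0 -ltNge.
  move=> h; rewrite -invfM -expr2 sqr_sqrtr ?ltW // mulVf // gt_eqF //.
have Pu : P *m u = l *: u by rewrite /u -scalemxAr Pu0 !scalerA mulrC.
have [H [HT HH He]] := @householder n u uu.
set e : 'cV[R]_n.+1 := delta_mx ord0 0.
set T := H^T *m P *m H.
have TT : T^T = T by rewrite /T !trmx_mul trmxK Psym mulmxA.
have Te : T *m e = l *: e.
  rewrite /T -mulmxA He -mulmxA Pu -scalemxAr -He mulmxA HH mul1mx //.
have Tcol : forall i, T i ord0 = l * (i == ord0)%:R.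
  move=> i; have := congr1 (fun M : 'cV_n.+1 => M i 0) Te.
  rewrite /e -colE !mxE => ->; rewrite eqxx andbT //.
pose T' : 'M[R]_(1 + n) := T.
have T'T : T' = T by [].
have l0 : lshift n (0 : 'I_1) = (ord0 : 'I_n.+1) by apply/val_inj.
have T'col : forall i, T' i (lshift n 0) = l * (i == lshift n 0)%:R.
  by move=> i; rewrite l0 Tcol.
have T'sym : T'^T = T' by rewrite T'T TT.
clearbody T'.
set S1 := drsubmx T'.
have T'E : T' = block_mx l%:M 0 0 S1.
  rewrite -[LHS](submxK T'); congr block_mx.
  - by apply/matrixP => i j; rewrite !ord1 !mxE T'col !eqxx /= mulr1 mulr1n.
  - rewrite -[ursubmx T']trmxK trmx_ursub T'sym.
    apply/matrixP => i j; rewrite !ord1 !mxE T'col.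
    by rewrite eq_shift.2 mulr0.
  - apply/matrixP => i j; rewrite !ord1 !mxE T'col.
    by rewrite eq_shift.2 mulr0.
have S1sym : S1^T = S1 by rewrite /S1 trmx_drsub T'sym.
have [Q1 [d1 [Q1Q1 S1E]]] := IH S1 S1sym.
pose B : 'M[R]_(1 + n) := block_mx 1%:M 0 0 Q1.
pose d : 'rV[R]_(1 + n) := row_mx (l%:M : 'rV_1) d1.
exists (H *m B), d.
have BB : B^T *m B = 1%:M.
  rewrite /B tr_block_mx mulmx_block !trmx0 trmx1 !mul0mx !mulmx0 !mul1mx.
  by rewrite !addr0 !add0r Q1Q1 -scalar_mx_block.
split.
  by rewrite trmx_mul -mulmxA (mulmxA H^T) HH mul1mx BB.
have HHT : H *m H^T = 1%:M by apply: mulmx1C.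
have PE : P = H *m T *m H^T.
  by rewrite /T !mulmxA HHT mul1mx -mulmxA HHT mulmx1.
rewrite PE trmx_mul !mulmxA; congr (_ *m _); rewrite -!mulmxA; congr (_ *m _).
rewrite mulmxA -/T -T'T.
suff goal : T' = @mulmx _ (1+n) (1+n) (1+n) B
   (@mulmx _ (1+n) (1+n) (1+n) (diag_mx d) (@trmx _ (1+n) (1+n) B)) by exact: goal.
rewrite T'E /d diag_mx_row /B tr_block_mx !trmx0 trmx1 !mulmx_block.
rewrite !mul0mx !mulmx0 !mul1mx !mulmx1 !addr0 !add0r mulmx0 mulmxA -S1E.
congr block_mx; apply/matrixP => i j; rewrite !ord1 !mxE //.
Qed.

Lemma col0_det n (Y : 'M[R]_n) i : (forall k, Y k i = 0) -> \det Y = 0.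
Proof.
move=> h; rewrite (expand_det_col _ i) big1 // => k _; by rewrite h mul0r.
Qed.

Lemma svd_exists n (M : 'M[R]_n) : M \in unitmx -> exists s, is_sing_vals M s.
Proof.
move=> Mu.
have Psym : (M^T *m M)^T = M^T *m M by rewrite trmx_mul trmxK.
have [Q [d [QQ PE]]] := spectral Psym.
have [QTu Qu] := mulmx1_unit QQ.
set Y := M *m Q.
have Yu : Y \in unitmx by rewrite unitmx_mul Mu.
have YY : Y^T *m Y = diag_mx d.
  rewrite /Y trmx_mul -mulmxA (mulmxA M^T) PE !mulmxA QQ mul1mx -mulmxA QQ mulmx1 //.
have dE : forall i, d 0 i = \sum_k Y k i ^+ 2.
  move=> i; have := congr1 (fun A : 'M_n => A i i) YY; rewrite !mxE eqxx mulr1n => <-.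
  by apply: eq_bigr => k _; rewrite mxE expr2.
have d_gt0 : forall i, 0 < d 0 i.
  move=> i; rewrite lt_def dE sumr_ge0 ?andbT; last by move=> k _; rewrite sqr_ge0.
  apply/negP => /eqP h0.
  have : \sum_k Y k i ^+ 2 == 0 by rewrite h0.
  rewrite psumr_eq0; last by move=> k _; rewrite sqr_ge0.
  move=> /allP hk; move: Yu; rewrite unitmxE (@col0_det _ _ i) ?unitr0 //.
  by move=> k; apply/eqP; rewrite -sqrf_eq0; apply: hk; rewrite mem_index_enum.
pose s := \row_i Num.sqrt (d 0 i).
have s_gt0 : forall i, 0 < s 0 i by move=> i; rewrite mxE sqrtr_gt0.
pose si := \row_i (s 0 i)^-1.
exists s; split; first by move=> i; rewrite ltW.
exists (Y *m diag_mx si), Q; split; [|split; [by [] |]].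
  rewrite trmx_mul tr_diag_mx -mulmxA (mulmxA Y^T) YY !mulmx_diag.
  apply/matrixP => i j; rewrite !mxE; case: (i == j); rewrite ?mulr1n ?mulr0n //.
  have := d_gt0 i; set D := d 0 i => Dp.
  have sq : Num.sqrt D ^+ 2 = D by rewrite sqr_sqrtr // ltW.
  have sn : Num.sqrt D != 0 by rewrite gt_eqF // sqrtr_gt0.
  by rewrite -{2}sq; field.
rewrite -!mulmxA (mulmxA (diag_mx si)) mulmx_diag.
have -> : diag_mx (\row_j (si 0 j * s 0 j)) = 1%:M.
  apply/matrixP => i j; rewrite !mxE; case: (i == j); rewrite ?mulr1n ?mulr0n //.
  by rewrite mulVf // gt_eqF // sqrtr_gt0.
by rewrite mul1mx /Y -?mulmxA (mulmx1C QQ) mulmx1.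
Qed.

Definition frob2 n (C : 'M[R]_n) := \sum_i \sum_j C i j ^+ 2.

Lemma s4_sum n (M : 'M[R]_n) s : is_sing_vals M s ->
  \sum_i s 0 i ^+ 4 = frob2 (M^T *m M).
Proof.
move=> [_ [U [V [UU [VV ME]]]]].
set C := M^T *m M.
have CE : C = V *m diag_mx (\row_j (s 0 j * s 0 j)) *m V^T.
  rewrite /C ME !trmx_mul trmxK tr_diag_mx !mulmxA -(mulmxA _ U^T) UU mulmx1.
  by rewrite -(mulmxA V (diag_mx s)) mulmx_diag.
have CT : C^T = C by rewrite /C trmx_mul trmxK.
have -> : frob2 C = \tr (C *m C^T).
  rewrite /frob2 /mxtrace; apply: eq_bigr => i _; rewrite mxE.
  by apply: eq_bigr => j _; rewrite expr2 [C^T j i]mxE.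
rewrite CT CE -!mulmxA (mulmxA V^T) VV mul1mx.
rewrite (mulmxA (diag_mx _)) mulmx_diag mxtrace_mulC -mulmxA VV mulmx1 mxtrace_diag.
by apply: eq_bigr => i _; rewrite !mxE; ring.
Qed.

Lemma schatten4E n (M : 'M[R]_n) : M \in unitmx ->
  schatten4 M = Num.sqrt (Num.sqrt (frob2 (M^T *m M))).
Proof.
move=> Mu; rewrite /schatten4 /sing_vals.
have := xgetPex 0 (svd_exists Mu) => /s4_sum ->.
by [].
Qed.

Lemma CS n (a b : 'I_n -> R) :
  (\sum_i a i * b i) ^+ 2 <= (\sum_i a i ^+ 2) * (\sum_i b i ^+ 2).
Proof.
rewrite expr2 mulr_suml [X in _ <= X]mulr_suml.
under eq_bigr do rewrite mulr_sumr.
under [X in _ <= X]eq_bigr do rewrite mulr_sumr.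
set L := \sum_i _; set S := \sum_i _.
have SE : S = \sum_i \sum_j a j ^+ 2 * b i ^+ 2 by rewrite /S exchange_big.
suff : L + L <= S + S by lra.
rewrite {2}SE /L /S -big_split /= -big_split /=; apply: ler_sum => i _.
rewrite -!big_split /=; apply: ler_sum => j _.
have := sqr_ge0 (a i * b j - a j * b i); nra.
Qed.

Lemma sqrt_le_sqrt (x y : R) : x <= y -> Num.sqrt x <= Num.sqrt y.
Proof.
move=> xy; have [y0|y0] := leP 0 y; first by rewrite ler_sqrt.
have -> : Num.sqrt y = 0 by rewrite ltr0_sqrtr.
by rewrite ltr0_sqrtr // (le_lt_trans xy).
Qed.

Lemma vnorm_ge0 n (v : 'cV[R]_n) : 0 <= vnorm v.
Proof. by rewrite /vnorm sqrtr_ge0. Qed.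

Lemma sumsq_ge0 n (a : 'I_n -> R) : 0 <= \sum_i a i ^+ 2.
Proof. by apply: sumr_ge0 => i _; rewrite sqr_ge0. Qed.

Lemma vnorm1 n (v : 'cV[R]_n) : vnorm v = 1 -> \sum_i v i 0 ^+ 2 = 1.
Proof.
rewrite /vnorm => h; rewrite -(@sqr_sqrtr _ (\sum_i v i 0 ^+ 2)) ?sumsq_ge0 //.
by rewrite h expr1n.
Qed.

Lemma vnorm_entry n (v : 'cV[R]_n) i : `|v i 0| <= vnorm v.
Proof.
rewrite -sqrtr_sqr /vnorm; apply: sqrt_le_sqrt.
rewrite (bigD1 i) //= lerDl; apply: sumr_ge0 => j _; exact: sqr_ge0.
Qed.

Lemma vnorm_mul_bound n (B : 'M[R]_n) (x : 'cV[R]_n) :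
  vnorm x = 1 -> vnorm (B *m x) <= Num.sqrt (frob2 B).
Proof.
move=> /vnorm1 x1; apply: sqrt_le_sqrt; rewrite /frob2; apply: ler_sum => i _.
rewrite mxE; apply: le_trans (CS _ _) _.
by rewrite x1 mulr1.
Qed.

Definition spec_set n (B : 'M[R]_n) :=
  [set vnorm (B *m x) | x in [set x : 'cV[R]_n | vnorm x = 1]].

Lemma spec_has_ub n (B : 'M[R]_n) : has_ubound (spec_set B).
Proof.
exists (Num.sqrt (frob2 B)) => _ [x /= x1 <-]; exact: vnorm_mul_bound.
Qed.

Lemma spec_ub n (B : 'M[R]_n) x : vnorm x = 1 -> vnorm (B *m x) <= spec_norm B.
Proof.
move=> x1; rewrite /spec_norm; apply: (ub_le_sup (spec_has_ub B)).
by exists x.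
Qed.

Lemma spec_le n (B : 'M[R]_n) c : 0 <= c ->
  (forall x, vnorm x = 1 -> vnorm (B *m x) <= c) -> spec_norm B <= c.
Proof.
move=> c0 h; rewrite /spec_norm; change (sup (spec_set B) <= c).
have [->|ne] := eqVneq (spec_set B) set0; first by rewrite sup0.
apply: ge_sup; first by apply/set0P.
by move=> _ [x /= x1 <-]; apply: h.
Qed.

Lemma spec_ge0 n (B : 'M[R]_n) : 0 <= spec_norm B.
Proof.
rewrite /spec_norm; change (0 <= sup (spec_set B)).
have [->|ne] := eqVneq (spec_set B) set0; first by rewrite sup0.
have /set0P [_ [x /= x1 _]] := ne.
apply: le_trans (vnorm_ge0 (B *m x)) _; exact: spec_ub.
Qed.

Lemma specA_le n (K : nat) (A : 'M[R]_n) :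
  (forall i, \sum_j A i j ^+ 2 = 1) ->
  (forall i : 'I_n, (#|[set j : 'I_n | (A *m A^T) i j != 0%R]%SET| <= K)%N) ->
  spec_norm A <= Num.sqrt K%:R.
Proof.
move=> rowA cardA; apply: spec_le; first exact: sqrtr_ge0.
move=> x /vnorm1 x1.
set y := A *m x; set M := A *m A^T; set z := A^T *m y.
set Y := \sum_i y i 0 ^+ 2; set Z := \sum_i z i 0 ^+ 2.
have Y0 : 0 <= Y by apply: sumsq_ge0.
have YE : Y = \sum_j z j 0 * x j 0.
  have : y^T *m y = z^T *m x by rewrite /z (trmx_mul A^T y) trmxK {2}/y mulmxA.
  move=> /(congr1 (fun m : 'M_1 => m 0 0)); rewrite vTv_sum -/Y => ->.
  by rewrite mxE; apply: eq_bigr => j _; rewrite mxE.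
have YZ : Y ^+ 2 <= Z.
  rewrite YE; apply: le_trans (CS _ _) _; by rewrite x1 mulr1.
have MT : M^T = M by rewrite /M trmx_mul trmxK.
have Mle : forall i k, M i k ^+ 2 <= 1.
  move=> i k; rewrite /M mxE.
  have -> : \sum_j A i j * A^T j k = \sum_j A i j * A k j.
    by apply: eq_bigr => j _; rewrite mxE.
  by apply: le_trans (CS _ _) _; rewrite !rowA mulr1.
have ZE : Z = \sum_i \sum_k y i 0 * M i k * y k 0.
  have : z^T *m z = y^T *m M *m y by rewrite /z (trmx_mul A^T y) trmxK /M !mulmxA.
  move=> /(congr1 (fun m : 'M_1 => m 0 0)); rewrite vTv_sum -/Z => ->.
  rewrite mxE; under eq_bigr do rewrite mxE mulr_suml.
  rewrite exchange_big; apply: eq_bigr => i _; apply: eq_bigr => k _.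
  by rewrite !mxE.
pose c i k : R := (M i k != 0)%:R.
have term : forall i k, y i 0 * M i k * y k 0 <=
    c i k * (y i 0 ^+ 2) / 2 + c i k * (y k 0 ^+ 2) / 2.
  move=> i k; rewrite /c; have [->|Mn0] := eqVneq (M i k) 0.
    by rewrite mulr0 mul0r !mul0r addr0.
  rewrite mul1r mul1r.
  have hM := Mle i k.
  have nM : `|M i k| <= 1.
    have : `|M i k| ^+ 2 <= 1 by rewrite real_normK ?num_real.
    have := normr_ge0 (M i k); nra.
  apply: le_trans (ler_norm _) _.
  rewrite !normrM -[y i 0 ^+ 2]real_normK ?num_real // -[y k 0 ^+ 2]real_normK ?num_real //.
  have a0 := normr_ge0 (y i 0); have b0 := normr_ge0 (y k 0).
  have ab0 : 0 <= `|y i 0| * `|y k 0| by rewrite mulr_ge0.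
  have := sqr_ge0 (`|y i 0| - `|y k 0|); have := normr_ge0 (M i k); nra.
have ZK : Z <= K%:R * Y.
  have h1 : Z <= \sum_i \sum_k (c i k * (y i 0 ^+ 2) / 2 + c i k * (y k 0 ^+ 2) / 2).
    by rewrite ZE; apply: ler_sum => i _; apply: ler_sum => k _; apply: term.
  apply: le_trans h1 _.
  have sw : \sum_i \sum_k c i k * (y k 0 ^+ 2) / 2 = \sum_i \sum_k c i k * (y i 0 ^+ 2) / 2.
    rewrite exchange_big; apply: eq_bigr => i _; apply: eq_bigr => k _.
    have csym : forall a b, c a b = c b a.
      by move=> a b; rewrite /c -{1}MT mxE.
    by rewrite csym.
  under eq_bigr do rewrite big_split /=.
  rewrite big_split /= sw -mulr2n.
  have -> : \sum_i \sum_k c i k * y i 0 ^+ 2 / 2 = (\sum_i \sum_k c i k * y i 0 ^+ 2) / 2.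
    by rewrite mulr_suml; apply: eq_bigr => i _; rewrite mulr_suml.
  have h2 : forall S : R, S / 2 *+ 2 = S by move=> S; rewrite mulr2n; field.
  rewrite h2 /Y mulr_sumr.
  apply: ler_sum => i _; rewrite -mulr_suml ler_wpM2r ?sqr_ge0 //.
  have -> : \sum_k c i k = #|[set k | M i k != 0%R]%SET|%:R.
    have -> : \sum_k c i k = \sum_(k | M i k != 0) 1.
      rewrite [RHS]big_mkcond /=; apply: eq_bigr => k _; rewrite /c.
      by case: (M i k != 0).
    by rewrite sumr_const cardsE.
  by rewrite (ler_nat R) cardA.
rewrite /vnorm -/Y; apply: sqrt_le_sqrt.
have [Yeq0|Ypos] := eqVneq Y 0; first by rewrite Yeq0.
have Yp : 0 < Y by rewrite lt_def Ypos Y0.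
have : Y * Y <= K%:R * Y by rewrite -expr2; apply: le_trans YZ ZK.
by rewrite ler_pM2r.
Qed.

Lemma inv_unique n (W Z : 'M[R]_n) : W \in unitmx -> W *m Z = 1%:M -> invmx W = Z.
Proof. by move=> Wu WZ; rewrite -[Z](mulKmx Wu) WZ mulmx1. Qed.

Lemma diag_inv n (G : 'M[R]_n) : is_diag_mx G -> G \in unitmx ->
  exists h : 'rV[R]_n, invmx G = diag_mx h.
Proof.
move=> /diag_mxP [d ->] Gu.
have dn0 : forall i, d 0 i != 0.
  move=> i; apply/negP => /eqP d0; move: Gu; rewrite unitmxE (@col0_det _ _ i) ?unitr0 //.
  by move=> k; rewrite mxE; case: eqP => [->|]; rewrite ?d0 ?mulr0n ?mul0rn.
exists (\row_i (d 0 i)^-1); apply: inv_unique => //.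
rewrite mulmx_diag; apply/matrixP => i j; rewrite !mxE.
by case: eqP => [->|]; rewrite ?mulr1n ?mulr0n // mulfV.
Qed.

Lemma h_bound n (A : 'M[R]_n) (h : 'rV[R]_n) :
  (forall i, \sum_j A i j ^+ 2 = 1) ->
  forall i, `|h 0 i| <= spec_norm (diag_mx h *m A).
Proof.
move=> rowA i.
set x : 'cV[R]_n := (row i A)^T.
have x1 : vnorm x = 1.
  rewrite /vnorm -[RHS]sqrtr1 -(rowA i); congr Num.sqrt.
  by apply: eq_bigr => j _; rewrite !mxE.
apply: le_trans (spec_ub _ x1); apply: le_trans (vnorm_entry _ i).
rewrite mul_diag_mx mxE.
have -> : \sum_j (\matrix_(i0, j0) (h 0 i0 * A i0 j0)) i j * x j 0 = h 0 i.
  rewrite -[RHS]mulr1 -(rowA i) mulr_sumr; apply: eq_bigr => j _.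
  by rewrite !mxE expr2 mulrA.
by [].
Qed.

Lemma sqrt4_scale (s F : R) : 0 <= s -> 0 <= F ->
  Num.sqrt (Num.sqrt (s ^+ 4 * F)) = s * Num.sqrt (Num.sqrt F).
Proof.
move=> s0 F0.
have -> : s ^+ 4 = (s ^+ 2) ^+ 2 by rewrite -exprM.
rewrite sqrtrM ?sqr_ge0 // sqrtr_sqr ger0_norm ?sqr_ge0 //.
rewrite sqrtrM ?sqr_ge0 // sqrtr_sqr ger0_norm //.
Qed.

Lemma frob2_ge0 n (C : 'M[R]_n) : 0 <= frob2 C.
Proof. by apply: sumr_ge0 => i _; apply: sumsq_ge0. Qed.

Lemma s4_bound n (M2 : 'M[R]_n) (h : 'rV[R]_n) (s : R) :
  M2 \in unitmx -> (M2 *m diag_mx h) \in unitmx -> 0 <= s ->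
  (forall i, `|h 0 i| <= s) ->
  schatten4 (M2 *m diag_mx h) <= s * schatten4 M2.
Proof.
move=> M2u M1u s0 hs.
rewrite !schatten4E // -sqrt4_scale ?frob2_ge0 //.
apply: sqrt_le_sqrt; apply: sqrt_le_sqrt.
set C := M2^T *m M2.
have -> : (M2 *m diag_mx h)^T *m (M2 *m diag_mx h) = diag_mx h *m C *m diag_mx h.
  by rewrite trmx_mul tr_diag_mx /C !mulmxA.
rewrite /frob2 mulr_sumr; apply: ler_sum => i _; rewrite mulr_sumr; apply: ler_sum => j _.
rewrite mul_mx_diag mxE mul_diag_mx mxE.
have hi := hs i; have hj := hs j.
have hi2 : h 0 i ^+ 2 <= s ^+ 2.
  by rewrite -real_normK ?num_real // lerXn2r // ?nnegrE.
have hj2 : h 0 j ^+ 2 <= s ^+ 2.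
  by rewrite -real_normK ?num_real // lerXn2r // ?nnegrE.
have : h 0 i ^+ 2 * h 0 j ^+ 2 <= s ^+ 2 * s ^+ 2.
  by apply: ler_pM; rewrite ?sqr_ge0.
have := sqr_ge0 (C i j).
move=> c0 hh.
have -> : (h 0 i * C i j * h 0 j) ^+ 2 = (h 0 i ^+ 2 * h 0 j ^+ 2) * C i j ^+ 2 by ring.
have -> : s ^+ 4 = s ^+ 2 * s ^+ 2 by ring.
by apply: ler_wpM2r.
Qed.
End S.

Local Close Scope classical_set_scope.

Theorem lemma5 (R : realType) (N K : nat) (A G : 'M[R]_N) :
  A \in unitmx ->
  (forall i : 'I_N, \sum_(j < N) A i j ^+ 2 = 1) ->
  (forall i : 'I_N, (#|[set j : 'I_N | (A *m A^T) i j != 0%R]| <= K)%N) ->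
  is_diag_mx G -> G \in unitmx ->
  kappa A = spec_norm A * schatten4 (invmx A) /\
  kappa A <= Num.sqrt (K%:R) * (spec_norm (invmx G *m A) * schatten4 (invmx A *m G)) /\
  Num.sqrt (K%:R) * (spec_norm (invmx G *m A) * schatten4 (invmx A *m G))
    = Num.sqrt (K%:R) * kappa (invmx G *m A).
Proof.
move=> Au rowA cardA Gd Gu.
have GiAu : invmx G *m A \in unitmx by rewrite unitmx_mul unitmx_inv Gu.
split; first by [].
split; last first.
  rewrite /kappa; congr (_ * (_ * _)); congr schatten4; apply/esym/inv_unique => //.
  by rewrite -mulmxA (mulmxA A) mulmxV // mul1mx mulVmx.
have [h Gh] := diag_inv Gd Gu.
set s := spec_norm (invmx G *m A).
have s0 : 0 <= s by apply: spec_ge0.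
have hs : forall i, `|h 0 i| <= s by move=> i; rewrite /s Gh; apply: h_bound.
have M2u : invmx A *m G \in unitmx by rewrite unitmx_mul unitmx_inv Au.
have M1E : invmx A = (invmx A *m G) *m diag_mx h by rewrite -Gh mulmxK.
have S4 : schatten4 (invmx A) <= s * schatten4 (invmx A *m G).
  by rewrite {1}M1E; apply: s4_bound => //; rewrite -M1E unitmx_inv.
rewrite /kappa; apply: ler_pM.
- exact: spec_ge0.
- by rewrite /schatten4 sqrtr_ge0.
- exact: specA_le.
- exact: S4.
Qed.
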